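(* Fix a partition $[n]=U\sqcup D$ into up and down indices. A join-irreducible element $\gamma$ of the weak order on $S_n$ avoids both $\bar{2}13$ and $13\underline{2}$ if and only if its associated subset is $A_{k,l}$ for some $1\le k\le l\le n-1$, where $A_{k,k}=[1,k]$ and, for $k<l$, writing $U_{k,l}=U\cap[k+1,l]$: $A_{k,l}=[1,k]\cup U_{k,l}\cup[l+1,n]$ if $k+1,l\in D$; $A_{k,l}=U_{k,l}\cup[l+1,n]$ if $k+1\in U$, $l\in D$; $A_{k,l}=[1,k]\cup U_{k,l}$ if $k+1\in D$, $l\in U$; and $A_{k,l}=U_{k,l}$ if $k+1,l\in U$.
   Context: $S_n$: permutations of $[n]$ in one-line notation $x_1\cdots x_n$; weak order $x\le y$ iff $I(x)\subseteq I(y)$, $I(x)=\{(x_j,x_i):i<j,x_i>x_j\}$. Join-irreducibles (elements covering exactly one element) correspond bijectively to subsets $A\subseteq[n]$ with $\max([n]\setminus A)>\min A$: the permutation lists $[n]\setminus A$ in increasing order followed by $A$ in increasing order; this $A$ is the associated subset. A permutation $x$ contains $\bar{2}13$ if there are $i<j<k$ with $x_j<x_i<x_k$ and $x_i\in U$; contains $13\underline{2}$ if there are $i<j<k$ with $x_i<x_k<x_j$ and $x_k\in D$; otherwise it avoids the pattern. *)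

(* Defs.v *)
From mathcomp Require Import all_boot.
Set Implicit Arguments. Unset Strict Implicit. Unset Printing Implicit Defensive.

(* A permutation of [n] in one-line notation: a sequence x_1 ... x_n that is a
   rearrangement of 1,...,n.  x_i is [nth 0 x (i-1)]. *)
Definition is_perm (n : nat) (x : seq nat) : bool := perm_eq x (iota 1 n).

Definition inv_set (x : seq nat) (p : nat * nat) : Prop :=
  exists i j, [/\ i < j, j < size x, nth 0 x i > nth 0 x j &
                  p = (nth 0 x j, nth 0 x i)].

Definition weak_le (x y : seq nat) : Prop := forall p, inv_set x p -> inv_set y p.
Definition weak_lt (x y : seq nat) : Prop := weak_le x y /\ x <> y.

Definition covers (n : nat) (y x : seq nat) : Prop :=
  [/\ is_perm n x, is_perm n y, weak_lt x y &
      forall z, is_perm n z -> weak_lt x z -> weak_lt z y -> False].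

Definition join_irreducible (n : nat) (g : seq nat) : Prop :=
  is_perm n g /\ exists y, covers n g y /\ forall z, covers n g z -> z = y.

(* Subsets of [n] are boolean predicates on nat (only values in [n] matter). *)
Definition jperm (n : nat) (A : pred nat) : seq nat :=
  [seq v <- iota 1 n | ~~ A v] ++ [seq v <- iota 1 n | A v].

(* max([n]\A) > min A  (both sets nonempty). *)
Definition valid_subset (n : nat) (A : pred nat) : Prop :=
  exists a b, [/\ 1 <= a <= n, 1 <= b <= n, A a, ~~ A b & a < b].

Definition assoc_subset (n : nat) (g : seq nat) (A : pred nat) : Prop :=
  valid_subset n A /\ g = jperm n A.

(* Pattern containment; U = up indices, D = [n] \ U = down indices. *)
Definition contains_bar213 (U : pred nat) (x : seq nat) : Prop :=
  exists i j k, [/\ i < j, j < k, k < size x,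
    nth 0 x j < nth 0 x i < nth 0 x k & U (nth 0 x i)].

Definition contains_13under2 (U : pred nat) (x : seq nat) : Prop :=
  exists i j k, [/\ i < j, j < k, k < size x,
    nth 0 x i < nth 0 x k < nth 0 x j & ~~ U (nth 0 x k)].

Definition Ukl (U : pred nat) (k l : nat) : pred nat :=
  fun i => U i && (k < i <= l).

Definition Akl (n : nat) (U : pred nat) (k l : nat) : pred nat :=
  fun i =>
    if k == l then 1 <= i <= k
    else if ~~ U k.+1 && ~~ U l then [|| 1 <= i <= k, Ukl U k l i | l < i <= n]
    else if U k.+1 && ~~ U l then Ukl U k l i || (l < i <= n)
    else if ~~ U k.+1 && U l then (1 <= i <= k) || Ukl U k l i
    else Ukl U k l i.

(* Main.v *)
Require Import Defs.
From mathcomp Require Import all_boot.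
From mathcomp Require Import zify.
From Stdlib Require Classical_Prop.
Set Implicit Arguments. Unset Strict Implicit. Unset Printing Implicit Defensive.

Definition sw (d i : nat) := if i == d then d.+1 else if i == d.+1 then d else i.

Lemma sw_inv d i : sw d (sw d i) = i.
Proof. rewrite /sw; do ! case: ifP; lia. Qed.

Lemma sw_lt d i m : d.+1 < m -> i < m -> sw d i < m.
Proof. rewrite /sw; do ! case: ifP; lia. Qed.

Lemma sw_lt_iff d i j : i != j -> ~~ ((i == d) && (j == d.+1)) ->
  (sw d j < sw d i) = (j < i) && ~~ ((i == d.+1) && (j == d)).
Proof. rewrite /sw; do ! case: ifP; lia. Qed.

Lemma perm_props n x : is_perm n x ->
  [/\ uniq x, size x = n & forall v, (v \in x) = (1 <= v <= n)].
Proof.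
move=> px; split.
- by rewrite (perm_uniq px) iota_uniq.
- by rewrite (perm_size px) size_iota.
- by move=> v; rewrite (perm_mem px) mem_iota; lia.
Qed.

Lemma inv_setE x a b : uniq x ->
  inv_set x (a, b) <-> [/\ a \in x, b \in x, a < b & index b x < index a x].
Proof.
move=> ux; split.
- case=> i [j [ij js ji [-> ->]]].
  have is_ : i < size x := ltn_trans ij js.
  by rewrite !mem_nth // !index_uniq.
- case=> ax bx ab iba.
  exists (index b x), (index a x); split => //; first by rewrite index_mem.
  + by rewrite !nth_index.
  + by rewrite !nth_index.
Qed.

Lemma index_inj (x : seq nat) a b : a \in x -> b \in x -> index a x = index b x -> a = b.
Proof. by move=> ax bx e; rewrite -(nth_index 0 ax) e nth_index. Qed.

Lemma ord_transfer x y : uniq x -> uniq y -> x =i y ->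
  (forall p, inv_set x p -> inv_set y p) -> (forall p, inv_set y p -> inv_set x p) ->
  forall a b, a \in x -> b \in x -> a != b -> index a x < index b x -> index a y < index b y.
Proof.
move=> ux uy xy Hxy Hyx a b ax bx nab iab.
have ay : a \in y by rewrite -xy.
have by_ : b \in y by rewrite -xy.
case: (ltngtP a b) => [ab | ba | e]; last by rewrite e eqxx in nab.
- have nyx : ~ inv_set y (a, b).
    move/Hyx/(inv_setE _ _ ux) => [_ _ _]; lia.
  case: (ltngtP (index a y) (index b y)) => // h.
    by case: nyx; apply/(inv_setE _ _ uy).
  by move: nab; rewrite (index_inj ay by_ h) eqxx.
- have : inv_set x (b, a) by apply/(inv_setE _ _ ux).
  by move/Hxy/(inv_setE _ _ uy) => [].
Qed.

Lemma sorted_index (x : seq nat) : uniq x -> sorted (fun a b => index a x < index b x) x.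
Proof.
move=> ux; rewrite sorted_pairwise; last by move=> ? ? ?; apply: ltn_trans.
by apply/(pairwiseP 0) => i j; rewrite !inE => hi hj ij; rewrite !index_uniq.
Qed.

Lemma inv_inj n x y : is_perm n x -> is_perm n y ->
  (forall p, inv_set x p -> inv_set y p) -> (forall p, inv_set y p -> inv_set x p) -> x = y.
Proof.
move=> px py Hxy Hyx.
have [ux sx mx] := perm_props px.
have [uy sy my] := perm_props py.
have xy : x =i y by move=> v; rewrite mx my.
have T := ord_transfer uy ux (fun v => esym (xy v)) Hyx Hxy.
apply: (@irr_sorted_eq _ (fun a b => index a x < index b x)).
- by move=> ? ? ?; apply: ltn_trans.
- by move=> ?; rewrite ltnn.
- exact: sorted_index.
- rewrite sorted_pairwise; last by move=> ? ? ?; apply: ltn_trans.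
  apply/(pairwiseP 0) => i j; rewrite !inE => hi hj ij.
  apply: T; rewrite ?mem_nth //; last by rewrite !index_uniq.
  by rewrite nth_uniq //; lia.
- exact: xy.
Qed.

Definition swp (g : seq nat) d := mkseq (fun i => nth 0 g (sw d i)) (size g).

Section Swap.
Variables (g : seq nat) (d : nat).
Hypothesis dg : d.+1 < size g.
Hypothesis ug : uniq g.

Lemma nth_swp i : i < size g -> nth 0 (swp g d) i = nth 0 g (sw d i).
Proof. by move=> h; rewrite nth_mkseq. Qed.

Lemma size_swp : size (swp g d) = size g.
Proof. by rewrite size_mkseq. Qed.

Lemma uniq_swp : uniq (swp g d).
Proof.
apply/(uniqP 0) => i j; rewrite !inE size_swp => hi hj.
rewrite !nth_swp // => e.
have := (uniqP 0 ug) (sw d i) (sw d j).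
rewrite !inE !sw_lt // => /(_ isT isT e) e2.
by rewrite -(sw_inv d i) e2 sw_inv.
Qed.

Lemma mem_swp v : (v \in swp g d) = (v \in g).
Proof.
apply/idP/idP.
- case/(nthP 0) => i; rewrite size_swp => hi <-.
  by rewrite nth_swp // mem_nth // sw_lt.
- move=> vg; apply/(nthP 0); exists (sw d (index v g)).
    by rewrite size_swp sw_lt // index_mem.
  by rewrite nth_swp ?sw_inv ?nth_index // sw_lt // index_mem.
Qed.

Lemma index_swp v : v \in g -> index v (swp g d) = sw d (index v g).
Proof.
move=> vg.
have hi : sw d (index v g) < size g by rewrite sw_lt // index_mem.
rewrite -{1}(nth_index 0 vg) -{1}(sw_inv d (index v g)) -nth_swp //.
by rewrite index_uniq ?size_swp // uniq_swp.
Qed.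

Hypothesis desc : nth 0 g d.+1 < nth 0 g d.

Lemma inv_swp p : inv_set (swp g d) p <-> inv_set g p /\ p <> (nth 0 g d.+1, nth 0 g d).
Proof.
case: p => a b.
rewrite (inv_setE _ _ uniq_swp) (inv_setE _ _ ug) !mem_swp.
have d0 : d < size g by apply: ltnW.
split.
- case=> ag bg ab; rewrite !index_swp //.
  have nij : index a g != index b g.
    by apply/eqP => /(index_inj ag bg) e; move: ab; rewrite e ltnn.
  have nex : ~~ ((index a g == d) && (index b g == d.+1)).
    apply/negP; case/andP => /eqP ea /eqP eb.
    move: ab; rewrite -(nth_index 0 ag) -(nth_index 0 bg) ea eb.
    by move/(ltn_trans desc); rewrite ltnn.
  rewrite sw_lt_iff // => /andP [h1 h2]; split => //.
  case=> ea eb; move: h2; rewrite ea eb !index_uniq //; lia.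
- case=> [[ag bg ab h] hne]; split => //; rewrite !index_swp //.
  have nij : index a g != index b g.
    by apply/eqP => /(index_inj ag bg) e; move: ab; rewrite e ltnn.
  have nex : ~~ ((index a g == d) && (index b g == d.+1)).
    apply/negP; case/andP => /eqP ea /eqP eb.
    move: ab; rewrite -(nth_index 0 ag) -(nth_index 0 bg) ea eb.
    by move/(ltn_trans desc); rewrite ltnn.
  rewrite sw_lt_iff // h /=; apply/negP => /andP [/eqP ea /eqP eb].
  by apply: hne; rewrite -ea -eb !nth_index.
Qed.

End Swap.

Lemma perm_swp n g d : is_perm n g -> d.+1 < n -> is_perm n (swp g d).
Proof.
move=> pg dn; have [ug sg mg] := perm_props pg.
apply: uniq_perm; rewrite ?iota_uniq ?uniq_swp //; try by rewrite sg.
by move=> v; rewrite mem_swp ?sg // mg mem_iota; lia.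
Qed.

Lemma inv_pair g d : d.+1 < size g -> nth 0 g d.+1 < nth 0 g d ->
  inv_set g (nth 0 g d.+1, nth 0 g d).
Proof. by move=> dg desc; exists d, d.+1; split. Qed.

Lemma covers_swp n g d : is_perm n g -> d.+1 < n -> nth 0 g d.+1 < nth 0 g d ->
  covers n g (swp g d).
Proof.
move=> pg dn desc; have [ug sg mg] := perm_props pg.
have dg : d.+1 < size g by rewrite sg.
have I := inv_swp dg ug desc.
have P0 := inv_pair dg desc.
split.
- exact: perm_swp.
- exact: pg.
- split; first by move=> p /I [].
  move=> e; have := proj1 (I (nth 0 g d.+1, nth 0 g d)); rewrite e => /(_ P0) [_ H]; exact: H.
- move=> z pz [lez nez] [lzg nzg].
  case: (Classical_Prop.classic (inv_set z (nth 0 g d.+1, nth 0 g d))) => hz.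
  + apply: nzg; apply: (inv_inj pz pg) => // p gp.
    case: (Classical_Prop.classic (p = (nth 0 g d.+1, nth 0 g d))) => [-> // | ne].
    by apply: lez; apply/I.
  + apply: nez; apply: (inv_inj (perm_swp pg dn) pz) => // p zp.
    apply/I; split; first exact: lzg.
    by move=> e; apply: hz; rewrite -e.
Qed.

Lemma inc_range (g : seq nat) lo hi :
  (forall e, lo <= e -> e < hi -> nth 0 g e < nth 0 g e.+1) ->
  forall i j, lo <= i -> i < j -> j <= hi -> nth 0 g i < nth 0 g j.
Proof.
move=> H i j li; elim: j => // j IH ij jh.
case: (ltngtP i j) => [h | h | e].
- by apply: ltn_trans (IH h (ltnW jh)) (H j _ jh); lia.
- lia.
- subst j; exact: (H i li jh).
Qed.

Lemma JI_shape n g : join_irreducible n g -> exists A, valid_subset n A /\ g = jperm n A.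
Proof.
case=> pg [y [cy uy]].
have [ug sg mg] := perm_props pg.
have neq : forall e, e.+1 < n -> nth 0 g e != nth 0 g e.+1.
  move=> e en; apply/eqP => e'.
  have := (uniqP 0 ug) e e.+1; rewrite !inE sg => /(_ (ltnW en) en e').
  by move/eqP; rewrite eqn_leq ltnn andbF.
have strict : forall e, e.+1 < n -> ~~ (nth 0 g e.+1 < nth 0 g e) -> nth 0 g e < nth 0 g e.+1.
  by move=> e en h; rewrite ltn_neqAle neq // leqNgt h.
have [d [dn desc]] : exists d, d.+1 < n /\ nth 0 g d.+1 < nth 0 g d.
  case: (Classical_Prop.classic (exists d, d.+1 < n /\ nth 0 g d.+1 < nth 0 g d)) => // hn.
  exfalso.
  have inc : forall e, 0 <= e -> e < n.-1 -> nth 0 g e < nth 0 g e.+1.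
    move=> e _ en; apply: strict; first by lia.
    by apply/negP => h; apply: hn; exists e; split => //; lia.
  have noinv : forall p, ~ inv_set g p.
    move=> p [i [j [ij js ji _]]].
    have jn : j <= n.-1 by rewrite -sg; lia.
    move: (inc_range inc (leq0n i) ij jn) => h.
    by move: (ltn_trans h ji); rewrite ltnn.
  case: cy => py _ [lyg nyg] _.
  by apply: nyg; apply: (inv_inj py pg lyg) => p /noinv.
have dg : d.+1 < size g by rewrite sg.
have uniqd : forall e, e.+1 < n -> nth 0 g e.+1 < nth 0 g e -> e = d.
  move=> e en de.
  have eg : e.+1 < size g by rewrite sg.
  have E : swp g e = swp g d.
    by rewrite (uy _ (covers_swp pg en de)) (uy _ (covers_swp pg dn desc)).
  apply/eqP; apply: contraT => ned.
  have Pd := inv_pair dg desc.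
  have : inv_set (swp g e) (nth 0 g d.+1, nth 0 g d).
    apply/(inv_swp eg ug de); split => // [[h1 h2]].
    have := (uniqP 0 ug) d.+1 e.+1; rewrite !inE => /(_ dg eg h1) [] h3.
    by move: ned; rewrite h3 eqxx.
  by rewrite E => /(inv_swp dg ug desc) [_ []].
have inc : forall e, e.+1 < n -> e != d -> nth 0 g e < nth 0 g e.+1.
  move=> e en ne; apply: strict => //; apply/negP => h.
  by move: ne; rewrite (uniqd e en h) eqxx.
pose A := fun v => v \in drop d.+1 g.
have mtd : forall v, (v \in g) = (v \in take d.+1 g) || (v \in drop d.+1 g).
  by move=> v; rewrite -{1}(cat_take_drop d.+1 g) mem_cat.
have disj : forall v, v \in take d.+1 g -> v \in drop d.+1 g -> False.
  move=> v vt vd; move: ug; rewrite -(cat_take_drop d.+1 g) cat_uniq.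
  by case/and3P => _ /hasPn H _; move: (H v vd); rewrite vt.
have dt : nth 0 g d \in take d.+1 g.
  have : nth 0 (take d.+1 g) d \in take d.+1 g.
    by apply: mem_nth; rewrite size_take; case: ifP => _; [exact: ltnSn | exact: ltnW dg].
  by rewrite nth_take.
have d1d : nth 0 g d.+1 \in drop d.+1 g.
  have : nth 0 (drop d.+1 g) 0 \in drop d.+1 g.
    by apply: mem_nth; rewrite size_drop subn_gt0.
  by rewrite nth_drop addn0.
exists A; split.
- exists (nth 0 g d.+1), (nth 0 g d); split => //.
  + by rewrite -mg; apply: mem_nth.
  + by rewrite -mg; apply: mem_nth; exact: ltnW dg.
  + by apply/negP => h; apply: (disj _ dt h).
- rewrite -(cat_take_drop d.+1 g) /jperm; congr (_ ++ _).
  + apply: (irr_sorted_eq ltn_trans ltnn).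
    * rewrite sorted_pairwise; last exact: ltn_trans.
      apply/(pairwiseP 0) => i j; rewrite !inE size_take dg => hi hj ij.
      rewrite !nth_take //.
      apply: (@inc_range g 0 d) => //; try lia.
      by move=> e _ ed; apply: inc; lia.
    * by apply: sorted_filter; [exact: ltn_trans | exact: iota_ltn_sorted].
    * move=> v; rewrite mem_filter mem_iota /A.
      case vt: (v \in take d.+1 g).
        have vg : v \in g by rewrite mtd vt.
        move: vg; rewrite mg => vr.
        have vd : v \notin drop d.+1 g by apply/negP => h; apply: (disj _ vt h).
        by rewrite vd /=; lia.
      case vd: (v \in drop d.+1 g) => //=.
      case vr: (1 <= v < 1 + n) => //.
      by move: (mg v); rewrite mtd vt vd; lia.
  + apply: (irr_sorted_eq ltn_trans ltnn).
    * rewrite sorted_pairwise; last exact: ltn_trans.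
      apply/(pairwiseP 0) => i j; rewrite !inE size_drop => hi hj ij.
      rewrite !nth_drop.
      apply: (@inc_range g d.+1 n.-1); try lia.
      by move=> e de en; apply: inc; lia.
    * by apply: sorted_filter; [exact: ltn_trans | exact: iota_ltn_sorted].
    * move=> v; rewrite mem_filter mem_iota /A.
      case vd: (v \in drop d.+1 g) => //=.
      have vg : v \in g by rewrite mtd vd orbT.
      by move: vg; rewrite mg; lia.
Qed.
Definition NB (n : nat) (U A : pred nat) := forall a b c, 1 <= a -> c <= n -> a < b -> b < c ->
  A a -> ~~ A b -> A c -> U b -> False.
Definition N1 (n : nat) (U A : pred nat) := forall a b c, 1 <= a -> c <= n -> a < b -> b < c ->
  ~~ A a -> A b -> ~~ A c -> ~~ U b -> False.

Lemma Akl_mid n U k l v : k < l -> k < v <= l -> Akl n U k l v = U v.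
Proof.
move=> kl kv; rewrite /Akl /Ukl.
have -> : (k == l) = false by lia.
by case: (U k.+1); case: (U l); case: (U v) => /=; lia.
Qed.

Lemma Akl_lo n U k l v : k < l -> 1 <= v <= k -> Akl n U k l v = ~~ U k.+1.
Proof.
move=> kl kv; rewrite /Akl /Ukl.
have -> : (k == l) = false by lia.
by case: (U k.+1); case: (U l); case: (U v) => /=; lia.
Qed.

Lemma Akl_hi n U k l v : k < l -> l < v <= n -> Akl n U k l v = ~~ U l.
Proof.
move=> kl kv; rewrite /Akl /Ukl.
have -> : (k == l) = false by lia.
by case: (U k.+1); case: (U l); case: (U v) => /=; lia.
Qed.

Lemma Akl_eq n U k v : Akl n U k k v = (1 <= v <= k).
Proof. by rewrite /Akl eqxx. Qed.

Lemma comb_back n U (A : pred nat) k l : 1 <= k -> k <= l -> l <= n.-1 ->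
  (forall v, 1 <= v <= n -> A v = Akl n U k l v) -> NB n U A /\ N1 n U A.
Proof.
move=> k1 kl ln HA; split=> a b c a1 cn ab bc.
- rewrite !HA; try lia.
  have [klt|keq] : k < l \/ k = l by lia.
  2: by subst l; rewrite !Akl_eq; lia.
  case: (ltnP l b) => [lb | bl].
    rewrite (@Akl_hi n U k l _ klt (_ : l < c <= n)); last by lia.
    by rewrite (@Akl_hi n U k l _ klt (_ : l < b <= n)) //; lia.
  case: (ltnP k b) => [kb | bk].
    by rewrite (@Akl_mid n U k l _ klt (_ : k < b <= l)) //; lia.
  rewrite (@Akl_lo n U k l _ klt (_ : 1 <= a <= k)); last by lia.
  by rewrite (@Akl_lo n U k l _ klt (_ : 1 <= b <= k)) //; lia.
- rewrite !HA; try lia.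
  have [klt|keq] : k < l \/ k = l by lia.
  2: by subst l; rewrite !Akl_eq; lia.
  case: (ltnP l b) => [lb | bl].
    rewrite (@Akl_hi n U k l _ klt (_ : l < c <= n)); last by lia.
    by rewrite (@Akl_hi n U k l _ klt (_ : l < b <= n)) //; lia.
  case: (ltnP k b) => [kb | bk].
    rewrite (@Akl_mid n U k l _ klt (_ : k < b <= l)); last by lia.
    by case: (U b).
  rewrite (@Akl_lo n U k l _ klt (_ : 1 <= a <= k)); last by lia.
  by rewrite (@Akl_lo n U k l _ klt (_ : 1 <= b <= k)) //; lia.
Qed.

Lemma comb_fwd n U (A : pred nat) : valid_subset n A -> NB n U A -> N1 n U A ->
  exists k l, [/\ 1 <= k, k <= l, l <= n.-1 &
     forall v, 1 <= v <= n -> A v = Akl n U k l v].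
Proof.
case=> a [b [Ha Hb Aa Ab ab]] HNB HN1.
pose P v := (1 <= v <= n) && (A v != A 1).
have exP : exists v, P v.
  case E: (A 1); [exists b | exists a]; rewrite /P ?Ha ?Hb E /=; by move: Aa Ab; case: (A a); case: (A b).
case: (ex_minnP exP) => k1 /andP [Hk1 Pk1] mink.
pose Q v := (1 <= v <= n) && (A v != A n).
have exQ : exists v, Q v.
  case E: (A n); [exists b | exists a]; rewrite /Q ?Ha ?Hb E /=; by move: Aa Ab; case: (A a); case: (A b).
have ubQ : forall v, Q v -> v <= n by move=> v /andP [] /andP [].
case: (ex_maxnP exQ ubQ) => l /andP [Hl Ql] maxl.
have F1 : forall v, 1 <= v < k1 -> A v = A 1.
  move=> v Hv; case E: (A v == A 1); first by apply/eqP.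
  have : P v by rewrite /P E andbT; move: Hk1; lia.
  by move/mink; lia.
have F2 : forall v, l < v <= n -> A v = A n.
  move=> v Hv; case E: (A v == A n); first by apply/eqP.
  have : Q v by rewrite /Q E andbT; move: Hv; lia.
  by move/maxl; lia.
have k12 : 1 < k1.
  case: (ltnP 1 k1) => // h; have e : k1 = 1 by lia.
  by move: Pk1; rewrite e eqxx.
have ln : l < n.
  case: (ltnP l n) => // h; have e : l = n by lia.
  by move: Ql; rewrite e eqxx.
have kl : k1.-1 <= l.
  case: (leqP k1.-1 l) => // h.
  have e1 : A k1.-1 = A 1 by apply: F1; lia.
  have e2 : A k1.-1 = A n by apply: F2; lia.
  have e3 : A k1 = A n by apply: F2; lia.
  by move: Pk1; rewrite e3 -e2 e1 eqxx.
exists k1.-1, l; split; [lia | exact: kl | lia | ].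
move=> v Hv.
have [klt|keq] : k1.-1 < l \/ k1.-1 = l by lia.
2: {
  rewrite keq Akl_eq.
  have e3 : A k1 = A n by apply: F2; lia.
  have Ane : A n = ~~ A 1 by move: Pk1; rewrite e3; case: (A n); case: (A 1).
  have A1t : A 1.
    case E: (A 1) => //; exfalso.
    case: (ltnP a k1) => h.
      by move: Aa; rewrite F1 ?E //; lia.
    by move: Ab; rewrite F2 ?Ane ?E //; lia.
  case: (ltnP v k1) => h.
    by rewrite F1 ?A1t; lia.
  by rewrite F2 ?Ane ?A1t; lia. }
have ex_c : forall (c : bool) w, k1 <= w <= l -> A w != c ->
    (exists x, 1 <= x < w /\ A x = c) /\ (exists y, w < y <= n /\ A y = c).
  move=> c w Hw Hc; split.
    case E: (A 1 == c).
      by exists 1; split; [lia | exact/eqP].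
    exists k1; split; last by clear Hc; move: Pk1 E; case: (A k1); case: (A 1); case: c.
    have : k1 != w.
      by apply: contraNneq Hc => <-; move: Pk1 E; case: (A k1); case: (A 1); case: c.
    lia.
  case E: (A n == c).
    by exists n; split; [lia | exact/eqP].
  exists l; split; last by clear Hc; move: Ql E; case: (A l); case: (A n); case: c.
  have : l != w.
    by apply: contraNneq Hc => <-; move: Ql E; case: (A l); case: (A n); case: c.
  lia.
have key : forall w, k1 <= w <= l -> A w = U w.
  move=> w Hw; case Aw: (A w); case Uw: (U w) => //.
    have [[x [Hx Ax]] [y [Hy Ay]]] := ex_c false w Hw ltac:(by rewrite Aw).
    by exfalso; apply: (HN1 x w y); try lia; rewrite ?Ax ?Ay ?Aw ?Uw.
  have [[x [Hx Ax]] [y [Hy Ay]]] := ex_c true w Hw ltac:(by rewrite Aw).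
  by exfalso; apply: (HNB x w y); try lia; rewrite ?Ax ?Ay ?Aw ?Uw.
case: (ltnP v k1) => h1.
  rewrite F1; last by lia.
  rewrite Akl_lo //; last by lia.
  rewrite prednK; last by lia.
  rewrite -key; last by lia.
  by move: Pk1; case: (A k1); case: (A 1).
case: (leqP v l) => h2.
  rewrite Akl_mid //; last by lia.
  by apply: key; lia.
rewrite F2; last by lia.
rewrite Akl_hi //; last by lia.
rewrite -key; last by lia.
by move: Ql; case: (A l); case: (A n).
Qed.

Definition jL n (A : pred nat) := [seq v <- iota 1 n | ~~ A v].
Definition jR n (A : pred nat) := [seq v <- iota 1 n | A v].
Lemma hsub a c i : a <= i < a + c -> i - a < c. Proof. lia. Qed.
Section JP.
Variables (n : nat) (A : pred nat).
Local Notation L := (jL n A).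
Local Notation R := (jR n A).
Local Notation s := (jperm n A).
Lemma sE : s = L ++ R. Proof. by []. Qed.

Lemma jp_L i : i < size L -> nth 0 s i = nth 0 L i /\ ~~ A (nth 0 s i) /\ 1 <= nth 0 s i <= n.
Proof.
move=> h; rewrite sE nth_cat h; split => //.
have : nth 0 L i \in L by exact: mem_nth.
rewrite /jL /jR mem_filter mem_iota => /andP [-> ]; lia.
Qed.

Lemma jp_R i : size L <= i < size s -> nth 0 s i = nth 0 R (i - size L) /\ A (nth 0 s i) /\ 1 <= nth 0 s i <= n.
Proof.
move=> h; rewrite sE nth_cat ltnNge (proj1 (andP h)) /=; split => //.
have : nth 0 R (i - size L) \in R by apply: mem_nth; apply: hsub; move: h; rewrite sE size_cat.
rewrite /jL /jR mem_filter mem_iota => /andP [-> ]; lia.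
Qed.

Lemma jp_incr_L i j : i < j -> j < size L -> nth 0 s i < nth 0 s j.
Proof.
move=> ij jL; rewrite (proj1 (jp_L (ltn_trans ij jL))) (proj1 (jp_L jL)).
have sL : sorted ltn L by rewrite /jL /jR; apply: sorted_filter; [exact: ltn_trans | exact: iota_ltn_sorted].
by apply: (sorted_ltn_nth ltn_trans) => //; rewrite inE; lia.
Qed.

Lemma jp_incr_R i j : size L <= i -> i < j -> j < size s -> nth 0 s i < nth 0 s j.
Proof.
move=> Li ij js.
rewrite (proj1 (jp_R (i:=i) _)); last by lia.
rewrite (proj1 (jp_R (i:=j) _)); last by lia.
have sR : sorted ltn R by rewrite /jL /jR; apply: sorted_filter; [exact: ltn_trans | exact: iota_ltn_sorted].
apply: (sorted_ltn_nth ltn_trans) => //; rewrite ?inE; move: js; rewrite sE size_cat; lia.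
Qed.

Lemma jp_desc i j : i < j -> j < size s -> nth 0 s j < nth 0 s i -> i < size L <= j.
Proof.
move=> ij js h.
case: (ltnP j (size L)) => jL.
  by move: (jp_incr_L ij jL); lia.
case: (ltnP i (size L)) => iL; first by apply/andP; split.
by move: (jp_incr_R iL ij js); lia.
Qed.

Lemma jp_idx_B v : 1 <= v <= n -> ~~ A v -> index v s < size L /\ nth 0 s (index v s) = v.
Proof.
move=> hv Av.
have vL : v \in L by rewrite /jL /jR mem_filter Av mem_iota; lia.
have vs : v \in s by rewrite sE mem_cat vL.
by rewrite nth_index // sE index_cat vL index_mem.
Qed.

Lemma jp_idx_A v : 1 <= v <= n -> A v -> size L <= index v s < size s /\ nth 0 s (index v s) = v.
Proof.
move=> hv Av.
have vR : v \in R by rewrite /jL /jR mem_filter Av mem_iota; lia.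
have vL : v \notin L by rewrite /jL /jR mem_filter Av.
have vs : v \in s by rewrite sE mem_cat vR orbT.
rewrite nth_index // index_mem vs; split => //.
by rewrite sE index_cat (negbTE vL) leq_addr.
Qed.

End JP.

Lemma pat1_a n U A : NB n U A -> ~ contains_bar213 U (jperm n A).
Proof.
move=> HN [i [j [k [ij jk ks /andP [hji hik] Ui]]]].
have js : j < size (jperm n A) by exact: ltn_trans jk ks.
have [iL Lj] := andP (jp_desc ij js hji).
have [_ [Ai ri]] := jp_L iL.
have hj : size (jL n A) <= j < size (jperm n A) by apply/andP; split.
have hk : size (jL n A) <= k < size (jperm n A) by apply/andP; split => //; apply: leq_trans Lj (ltnW jk).
have [_ [Aj rj]] := jp_R hj.
have [_ [Ak rk]] := jp_R hk.
apply: (HN (nth 0 (jperm n A) j) (nth 0 (jperm n A) i) (nth 0 (jperm n A) k)) => //; lia.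
Qed.

Lemma pat1_b n U A : ~ contains_bar213 U (jperm n A) -> NB n U A.
Proof.
move=> HC a b c a1 cn ab bc Aa Ab Ac Ub; apply: HC.
have ra : 1 <= a <= n by lia.
have rb : 1 <= b <= n by lia.
have rc : 1 <= c <= n by lia.
have [/andP [ia ia2] ea] := jp_idx_A ra Aa.
have [ib eb] := jp_idx_B rb Ab.
have [/andP [ic ic2] ec] := jp_idx_A rc Ac.
exists (index b (jperm n A)), (index a (jperm n A)), (index c (jperm n A)); split => //.
- exact: leq_trans ib ia.
- case: (ltngtP (index a (jperm n A)) (index c (jperm n A))) => // h.
    by move: (jp_incr_R ic h ia2); rewrite ea ec; lia.
  by move: ea; rewrite h ec => e; move: ab bc; rewrite e; lia.
- by rewrite ea eb ec ab bc.
- by rewrite eb.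
Qed.

Lemma pat2_a n U A : N1 n U A -> ~ contains_13under2 U (jperm n A).
Proof.
move=> HN [i [j [k [ij jk ks /andP [hik hkj] Uk]]]].
have [jLt Lk] := andP (jp_desc jk ks hkj).
have iL := ltn_trans ij jLt.
have [_ [Ai ri]] := jp_L iL.
have [_ [Aj rj]] := jp_L jLt.
have hk : size (jL n A) <= k < size (jperm n A) by apply/andP; split.
have [_ [Ak rk]] := jp_R hk.
apply: (HN (nth 0 (jperm n A) i) (nth 0 (jperm n A) k) (nth 0 (jperm n A) j)) => //; lia.
Qed.

Lemma pat2_b n U A : ~ contains_13under2 U (jperm n A) -> N1 n U A.
Proof.
move=> HC a b c a1 cn ab bc Aa Ab Ac Ub; apply: HC.
have ra : 1 <= a <= n by lia.
have rb : 1 <= b <= n by lia.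
have rc : 1 <= c <= n by lia.
have [ia ea] := jp_idx_B ra Aa.
have [/andP [ib ib2] eb] := jp_idx_A rb Ab.
have [ic ec] := jp_idx_B rc Ac.
exists (index a (jperm n A)), (index c (jperm n A)), (index b (jperm n A)); split => //.
- case: (ltngtP (index a (jperm n A)) (index c (jperm n A))) => // h.
    by move: (jp_incr_L h ia); rewrite ea ec; lia.
  by move: ea; rewrite h ec => e; move: ab bc; rewrite e; lia.
- exact: leq_trans ic ib.
- by rewrite ea eb ec ab bc.
- by rewrite eb.
Qed.

Unset Implicit Arguments.
Set Strict Implicit.

Theorem proposition9p3 (n : nat) (U : pred nat) (g : seq nat) :
  join_irreducible n g ->
  ((~ contains_bar213 U g /\ ~ contains_13under2 U g) <->
   exists k l, [/\ 1 <= k, k <= l, l <= n.-1 & assoc_subset n g (Akl n U k l)]).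
Proof.
move=> HJ; have [A [vA gE]] := JI_shape HJ; split.
- case=> h1 h2; rewrite gE in h1 h2.
  have [k [l [k1 kl ln HA]]] := comb_fwd vA (pat1_b h1) (pat2_b h2).
  exists k, l; split => //; split.
  + case: vA => a [b [ra rb Aa Ab ab]]; exists a, b; split => //; rewrite -HA //.
  + rewrite gE /jperm; congr (_ ++ _); apply: eq_in_filter => v;
      rewrite mem_iota => hv; rewrite HA //; lia.
- case=> k [l [k1 kl ln [vAk gE']]]; rewrite gE'.
  have [NB' N1'] := @comb_back n U (Akl n U k l) k l k1 kl ln (fun v _ => erefl).
  by split; [exact: pat1_a | exact: pat2_a].
Qed.
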